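(* For every finite graph $G$, \[\mathrm{VCdim}(G)\le 8\,\mathrm{fw}_1(G)\quad\text{and}\quad \mathrm{2VCdim}(G)\le 8\,\mathrm{fw}_2(G)+2.\]
   Context: Graphs are finite, simple, undirected; $N(v)$ is the (open) neighbourhood of $v$. $\mathrm{VCdim}(G)$ is the largest size of a set $X\subseteq V(G)$ with $\{N(v)\cap X: v\in V(G)\}=2^X$. $\mathrm{2VCdim}(G)$ is the largest size of a set $X\subseteq V(G)$ such that for every two distinct $a,b\in X$ there is $c\in V(G)$ with $N(c)\cap X=\{a,b\}$. A $k$-flip of $G$ is a graph obtained by choosing a partition $\mathcal P$ of $V(G)$ with at most $k$ parts and, for some pairs $A,B$ of (possibly equal) parts, inverting the adjacency of every pair of distinct vertices $x\in A$, $y\in B$. Flipper game of radius $r$ and width $k$: $G_0=G$, runner chooses $v_0$; in round $i\ge1$ the flipper announces a $k$-flip $G_i$ of $G$, then the runner moves from $v_{i-1}$ to $v_i$ along a path of length at most $r$ in $G_{i-1}$; the flipper wins if $v_i$ is isolated in $G_i$. $\mathrm{fw}_r(G)$ is the least $k$ for which the flipper has a winning strategy. *)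

(* Defs.v *)
(* Graphs: a finite type T with an adjacency relation G : rel T
   (the theorem assumes G symmetric and irreflexive). *)
From mathcomp Require Import all_boot.
From mathcomp Require Import boolp.
Set Implicit Arguments. Unset Strict Implicit. Unset Printing Implicit Defensive.

Section Defs.
Variable T : finType.

Definition nbhd (G : rel T) (v : T) : {set T} := [set u | G v u].

Definition shattered (G : rel T) (X : {set T}) : Prop :=
  forall Y : {set T}, Y \subset X -> exists v, nbhd G v :&: X = Y.

Definition VCdim (G : rel T) : nat :=
  \max_(X : {set T} | `[< shattered G X >]) #|X|.

Definition pair_shattered (G : rel T) (X : {set T}) : Prop :=
  forall a b, a \in X -> b \in X -> a != b ->
    exists c, nbhd G c :&: X = [set a; b].

Definition twoVCdim (G : rel T) : nat :=
  \max_(X : {set T} | `[< pair_shattered G X >]) #|X|.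

(* k-flip: the partition into at most k parts is given by f : T -> 'I_k
   (parts = nonempty fibres), F : rel 'I_k symmetric selects the (unordered)
   pairs of parts whose adjacency is inverted. *)
Definition flip (k : nat) (G : rel T) (f : T -> 'I_k) (F : rel 'I_k) : rel T :=
  fun x y => (x != y) && (G x y (+) F (f x) (f y)).

Definition isolated (H : rel T) (v : T) : Prop := forall w, ~~ H v w.

(* Flipper game of radius r and width k, played on G.
   fwin r k G H v : the flipper wins from the position where the current graph
   is H (= G_{i-1}) and the runner stands at v (= v_{i-1}). *)
Inductive fwin (r k : nat) (G : rel T) : rel T -> T -> Prop :=
| fwin_step (H : rel T) (v : T) (f : T -> 'I_k) (F : rel 'I_k) :
    symmetric F ->
    (forall p : seq T, size p <= r -> path H v p ->
       isolated (flip G f F) (last v p) \/ fwin r k G (flip G f F) (last v p)) ->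
    fwin r k G H v.

Definition flipper_wins (r k : nat) (G : rel T) : Prop :=
  forall v0 : T, fwin r k G G v0.

Lemma fw_exists_bool (r : nat) (G : rel T) :
  (exists k, flipper_wins r k G) -> exists k, `[< flipper_wins r k G >].
Proof. by case=> k Hk; exists k; apply: asboolT. Qed.

(* fw_r(G): least width k for which the flipper wins (0 if none; such k
   always exists for finite graphs) *)
Definition fw (r : nat) (G : rel T) : nat :=
  match pselect (exists k, flipper_wins r k G) with
  | left h => ex_minn (fw_exists_bool h)
  | right _ => 0
  end.

End Defs.

(* Main.v *)
Require Import Defs.
From mathcomp Require Import all_boot zify.
From Stdlib Require Import Classical.
From mathcomp Require Import boolp.
Set Implicit Arguments. Unset Strict Implicit. Unset Printing Implicit Defensive.

Lemma card_bigcup_le (T : finType) n (A : 'I_n -> {set T}) :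
  #|\bigcup_(i < n) A i| <= \sum_(i < n) #|A i|.
Proof.
elim: n A => [|n IH] A; first by rewrite !big_ord0 cards0.
rewrite !big_ord_recr /= cardsU.
apply: leq_trans (leq_subr _ _) _.
by rewrite leq_add2r IH.
Qed.

Lemma binom_bound n r : r <= n ->
  (\sum_(i < r.+1) 'C(n, i)) * 3 ^ (n - r) <= 4 ^ n.
Proof.
move=> rn.
have -> : 4 ^ n = \sum_(i < n.+1) 'C(n, i) * 3 ^ (n - i).
  rewrite -[4]/(3 + 1) expnDn; apply: eq_bigr => i _; by rewrite exp1n muln1.
rewrite big_distrl /=.
rewrite (big_ord_widen n.+1 (fun i => 'C(n, i) * 3 ^ (n - r))) ?ltnS //.
rewrite big_mkcond /=; apply: leq_sum => i _.
case: ifP => // hi; rewrite leq_mul2l leq_pexp2l //; first by rewrite orbT.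
by apply: leq_sub2l; rewrite -ltnS.
Qed.

Lemma pow_aux k : 2 <= k -> 32 * k <= 8 ^ k.
Proof.
elim: k => // k IH; rewrite leq_eqVlt => /orP[/eqP <- //|]; rewrite ltnS => /[dup] k2 /IH h.
rewrite expnS; lia.
Qed.

Lemma num1 k : 1 <= k ->
  k * (\sum_(i < k.+2) 'C(8 * k + 1, i) + \sum_(i < k.+2) 'C(8 * k + 1, i)) + 1
   < 2 ^ (8 * k + 1 - 2).
Proof.
move=> k1; rewrite leq_eqVlt in k1; case/orP: k1 => [/eqP <-|k2].
  by rewrite !big_ord_recr big_ord0 /=.
set V := \sum_(i < k.+2) _.
have hb := binom_bound (_ : k.+1 <= 8 * k + 1); rewrite -/V in hb.
have {hb} hb := hb ltac:(lia).
have e0 : 8 * k + 1 - k.+1 = 7 * k by lia.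
rewrite e0 in hb.
have e1 : 4 ^ (8 * k + 1) = 4 * (256 ^ k * 256 ^ k).
  by rewrite expnD mulnC expnM -expnMn.
have e2 : 2 ^ (8 * k + 1 - 2) * 2 = 256 ^ k.
  have -> : 8 * k + 1 - 2 = (8 * k).-1 by lia.
  rewrite -expnSr prednK; last by lia.
  by rewrite expnM.
have e3 : 3 ^ (7 * k) = 2187 ^ k by rewrite expnM.
have A : 32 * k * 256 ^ k <= 2187 ^ k.
  apply: leq_trans (_ : 8 ^ k * 256 ^ k <= _); first by rewrite leq_mul2r pow_aux // orbT.
  rewrite -expnMn leq_exp2r //; lia.
rewrite e1 e3 in hb.
set P := 256 ^ k in e2 A hb; set Q := 2187 ^ k in A hb; set W := 2 ^ _ in e2 *.
have Qpos : 0 < Q by rewrite expn_gt0.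
have Ppos : 0 < P by rewrite expn_gt0.
rewrite -(ltn_pmul2r Qpos).
have hW : 4 <= W by rewrite /W; apply: leq_trans (_ : 2 ^ 2 <= _) => //; rewrite leq_exp2l //; lia.
rewrite -e2 in A hb.
have h1 : k * (V * Q) <= k * (4 * (W * 2 * (W * 2))) by rewrite leq_mul2l hb orbT.
have h2 : 32 * k * (W * 2) * (W * 2) <= Q * (W * 2) by rewrite leq_mul2r A orbT.
have h3 : 4 * Q <= W * Q by rewrite leq_mul2r hW orbT.
nia.
Qed.

Section C.
Variable T : finType.

Definition sdiff (A B : {set T}) := (A :\: B) :|: (B :\: A).

Lemma in_sdiff z A B : (z \in sdiff A B) = (z \in A) (+) (z \in B).
Proof. by rewrite /sdiff !inE; case: (z \in A); case: (z \in B). Qed.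

Lemma sdiffK A B : sdiff (sdiff A B) B = A.
Proof. by apply/setP => z; rewrite !in_sdiff; case: (z \in A); case: (z \in B). Qed.

Definition ball (X U : {set T}) r := [set Y in powerset X | #|sdiff Y U| <= r].

Lemma card_ball (X U : {set T}) r : U \subset X -> #|ball X U r| <= \sum_(i < r.+1) 'C(#|X|, i).
Proof.
move=> UX.
have inj : injective (fun Y => sdiff Y U).
  by move=> Y1 Y2 e; rewrite -(sdiffK Y1 U) e sdiffK.
rewrite -(card_imset _ inj).
apply: leq_trans (_ : #|\bigcup_(i < r.+1) [set D : {set T} | D \subset X & #|D| == i]| <= _).
  apply: subset_leq_card; apply/subsetP => D /imsetP[Y]; rewrite !inE => /andP[YX cY] ->.
  apply/bigcupP; exists (Ordinal (cY : #|sdiff Y U| < r.+1)) => //.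
  rewrite !inE eqxx andbT; apply/subsetP => z; rewrite in_sdiff.
  by case: (boolP (z \in Y)) => [/(subsetP YX)|] //= _ /(subsetP UX).
apply: leq_trans (card_bigcup_le _) _.
by apply: leq_sum => i _; rewrite cards_draws.
Qed.
End C.
Section C2.
Variable T : finType.
Lemma sameblock1 k (G : rel T) (X : {set T}) (f : T -> 'I_k) (F : rel 'I_k)
  (f1 f2 : T -> 'I_k) (F1 F2 : rel 'I_k) x y :
  symmetric G -> irreflexive G -> shattered G X -> #|X| = 8 * k + 1 -> 1 <= k ->
  x \in X -> y \in X -> x != y -> f x = f y ->
  (forall w, flip G f F x w -> #|nbhd (flip G f1 F1) w :&: X| <= k) ->
  (forall w, flip G f F y w -> #|nbhd (flip G f2 F2) w :&: X| <= k) -> False.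
Proof.
move=> symG irrG sh cX k1 xX yX nxy fxy bx b_y.
pose U1 t := [set z in X | F1 t (f1 z)].
pose U2 t := [set z in X | F2 t (f2 z)].
pose Bad := \bigcup_(t < k) (ball X (U1 t) k.+1 :|: ball X (U2 t) k.+1) :|: [set nbhd G y :&: X].
pose Cand := [set Y in powerset X | (x \in Y) && (y \notin Y)].
have cC : 2 ^ (8 * k + 1 - 2) <= #|Cand|.
  have inj : {in powerset (X :\: [set x; y]) &, injective (fun Z => x |: Z)}.
    move=> Z1 Z2; rewrite !inE => Z1s Z2s e.
    have xZ : forall Z : {set T}, Z \subset X :\: [set x; y] -> x \notin Z.
      by move=> Z /subsetP sZ; apply/negP => /sZ; rewrite !inE eqxx.
    apply/setP => z; case: (eqVneq z x) => [->|nzx].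
      by rewrite (negbTE (xZ _ Z1s)) (negbTE (xZ _ Z2s)).
    have := congr1 (fun A : {set T} => z \in A) e; by rewrite /= !inE (negbTE nzx).
  have cD : #|X :\: [set x; y]| = 8 * k + 1 - 2.
    rewrite cardsD (setIidPr _); first by rewrite cards2 nxy cX.
    by apply/subsetP => z; rewrite !inE => /orP[]/eqP ->.
  rewrite -cD -card_powerset -(card_in_imset inj).
  apply: subset_leq_card; apply/subsetP => Y /imsetP[Z]; rewrite !inE => sZ ->.
  rewrite !inE eqxx /=; apply/andP; split.
    by apply/subsetP => z; rewrite !inE => /orP[/eqP->//|/(subsetP sZ)]; rewrite !inE => /andP[].
  rewrite negb_or eq_sym nxy /=; apply/negP => /(subsetP sZ); by rewrite !inE eqxx orbT.
pose V := \sum_(i < k.+2) 'C(8 * k + 1, i).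
have cB : #|Bad| <= k * (V + V) + 1.
  rewrite cardsU cards1; apply: leq_trans (leq_subr _ _) _; rewrite leq_add2r.
  apply: leq_trans (card_bigcup_le _) _.
  apply: leq_trans (_ : \sum_(t < k) (V + V) <= _); last by rewrite sum_nat_const card_ord.
  apply: leq_sum => t _; rewrite cardsU; apply: leq_trans (leq_subr _ _) _.
  have sU1 : U1 t \subset X by apply/subsetP => z; rewrite inE => /andP[].
  have sU2 : U2 t \subset X by apply/subsetP => z; rewrite inE => /andP[].
  by apply: leq_add; rewrite /V -cX card_ball.
have [Y YC YB] : exists2 Y, Y \in Cand & Y \notin Bad.
  case: (boolP (Cand \subset Bad)) => [sCB|/subsetPn[Y ? ?]]; last by exists Y.
  have := leq_trans cC (leq_trans (subset_leq_card sCB) cB).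
  by rewrite leqNgt num1.
move: YC; rewrite !inE => /andP[YX /andP[xY nyY]].
have [w hw] := sh Y YX.
have Gw : forall u, u \in X -> G w u = (u \in Y).
  move=> u uX; have := congr1 (fun A : {set T} => u \in A) hw.
  by rewrite /= in_setI /nbhd in_set uX andbT.
have nwy : w != y.
  apply/eqP => ewy; move: YB; rewrite in_setU in_set1 -hw ewy eqxx orbT //.
have nwx : w != x by apply/eqP => ewx; move: (Gw x xX); rewrite xY ewx irrG.
have close : forall (g : T -> 'I_k) (P : rel 'I_k),
    #|nbhd (flip G g P) w :&: X| <= k -> Y \in ball X [set z in X | P (g w) (g z)] k.+1.
  move=> g P c; rewrite inE inE YX /=.
  set U := [set z in X | _].
  have sub : sdiff Y U :\ w \subset nbhd (flip G g P) w :&: X.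
    apply/subsetP => z; rewrite in_setD1 in_sdiff => /andP[nzw hz].
    have zX : z \in X.
      by move: hz; case: (boolP (z \in Y)) => [/(subsetP YX)//|_]; rewrite /U inE => /andP[].
    rewrite in_setI zX andbT /nbhd in_set /flip eq_sym nzw /= Gw //.
    by move: hz; rewrite /U inE zX.
  have := subset_leq_card sub; move: c; rewrite (cardsD1 w (sdiff Y U)).
  case: (w \in sdiff Y U); lia.
have inBad : forall t, Y \in ball X (U1 t) k.+1 :|: ball X (U2 t) k.+1 -> False.
  move=> t h; apply: (negP YB); rewrite in_setU; apply/orP; left.
  by apply/bigcupP; exists t.
case Fxw: (F (f x) (f w)).
  have Hyw : flip G f F y w.
    by rewrite /flip eq_sym nwy /= symG Gw // (negbTE nyY) -fxy Fxw.
  by apply: (inBad (f2 w)); rewrite in_setU (close _ _ (b_y w Hyw)) orbT.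
have Hxw : flip G f F x w.
  by rewrite /flip eq_sym nwx /= symG Gw // xY Fxw.
by apply: (inBad (f1 w)); rewrite in_setU (close _ _ (bx w Hxw)).
Qed.

Lemma fwin_runner (r k : nat) (G : rel T) (P : rel T -> T -> Prop) :
  (forall H v (f : T -> 'I_k) (F : rel 'I_k), symmetric F -> P H v ->
     exists p, [/\ size p <= r, path H v p, exists w, flip G f F (last v p) w
                 & P (flip G f F) (last v p)]) ->
  forall H v, fwin r k G H v -> P H v -> False.
Proof.
move=> step; fix IH 3 => H v [] H' v' f F symF Hw PHv.
have [p [sp pp [w Hw'] Pl]] := step H' v' f F symF PHv.
case: (Hw p sp pp) => [iso|fw]; first by move: (iso w); rewrite Hw'.
exact: (IH _ _ fw Pl).
Qed.

Lemma runner1 k (G : rel T) (X : {set T}) :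
  symmetric G -> irreflexive G -> shattered G X -> #|X| = 8 * k + 1 -> 1 <= k ->
  ~ flipper_wins 1 k G.
Proof.
move=> symG irrG sh cX k1 fwG.
pose Wg (H : rel T) v := k < #|nbhd H v :&: X|.
pose Xg (H : rel T) v := forall (f : T -> 'I_k) (F : rel 'I_k),
   exists w, H v w /\ Wg (flip G f F) w.
have [v0 hv0] := sh X (subxx X).
apply: (@fwin_runner 1 k G (fun H v => Wg H v \/ Xg H v) _ G v0 (fwG v0)); last first.
  by left; rewrite /Wg hv0 cX; lia.
move=> H v f F symF [Wv|Xv].
  pose A := nbhd H v :&: X.
  have [x xA Xx] : exists2 x, x \in A & Xg (flip G f F) x.
    apply: NNPP => nE.
    have inj : {in A &, injective f}.
      move=> a b aA bA fab; apply: NNPP => nab; move/eqP: nab => nab.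
      have aX : a \in X by move: aA; rewrite inE => /andP[].
      have bX : b \in X by move: bA; rewrite inE => /andP[].
      have bad : forall u, u \in A -> exists (g : T -> 'I_k) (P : rel 'I_k),
          forall w, flip G f F u w -> #|nbhd (flip G g P) w :&: X| <= k.
        move=> u uA.
        have nX : ~ Xg (flip G f F) u by move=> h; apply: nE; exists u.
        have [g /not_all_ex_not [P hP]] := not_all_ex_not _ _ nX.
        exists g, P => w Hw; rewrite leqNgt; apply/negP => c.
        by apply: hP; exists w.
      have [g1 [P1 h1]] := bad a aA.
      have [g2 [P2 h2]] := bad b bA.
      exact: (sameblock1 symG irrG sh cX k1 aX bX nab fab h1 h2).
    have : #|f @: A| <= k by apply: leq_trans (max_card _) _; rewrite card_ord.
    by rewrite card_in_imset // /A; move: Wv; rewrite /Wg; lia.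
  have [w [Hxw _]] := Xx f F.
  exists [:: x]; split => //=; first by move: xA; rewrite !inE => /andP[-> _].
    by exists w.
  by right.
have [w [Hvw Ww]] := Xv f F.
have /set0Pn [z zN] : nbhd (flip G f F) w :&: X != set0.
  by rewrite -card_gt0; apply: leq_ltn_trans Ww.
exists [:: w]; split => //=; first by rewrite Hvw.
  by exists z; move: zN; rewrite !inE => /andP[].
by left.
Qed.
Lemma three_elems (A : {set T}) : 2 < #|A| ->
  exists z1 z2 z3, [/\ z1 \in A, z2 \in A, z3 \in A & [/\ z1 != z2, z1 != z3 & z2 != z3]].
Proof.
move=> hA.
have /set0Pn [z1 h1] : A != set0 by rewrite -card_gt0; apply: leq_trans hA.
have hA1 : 1 < #|A :\ z1| by move: hA; rewrite (cardsD1 z1) h1.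
have /set0Pn [z2 h2] : A :\ z1 != set0 by rewrite -card_gt0; apply: leq_trans hA1.
have hA2 : 0 < #|A :\ z1 :\ z2| by move: hA1; rewrite (cardsD1 z2 (A :\ z1)) h2.
have /set0Pn [z3 h3] : A :\ z1 :\ z2 != set0 by rewrite -card_gt0.
move: h2 h3; rewrite !inE => /andP[n21 h2] /and3P[n32 n31 h3].
exists z1, z2, z3; split => //; split => //; by rewrite eq_sym.
Qed.

Definition R2 (H : rel T) (X : {set T}) (x : T) : {set T} :=
  [set z in X | [exists c, H x c && H c z]].

Lemma sameblock2 k (G : rel T) (X : {set T}) (f : T -> 'I_k) (F : rel 'I_k) x y :
  symmetric G -> irreflexive G -> symmetric F -> pair_shattered G X ->
  x \in X -> y \in X -> x != y -> f x = f y ->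
  #|R2 (flip G f F) X x| <= k -> #|R2 (flip G f F) X y| <= k -> 4 * k + 3 <= #|X| -> False.
Proof.
move=> symG irrG symF psh xX yX nxy fxy cRx cRy cX.
set H := flip G f F.
set S := R2 H X x :|: R2 H X y :|: [set x; y].
set Q := X :\: S.
have cQ : 2 * k + 1 <= #|Q|.
  have : #|X| <= #|Q| + #|S|.
    apply: leq_trans (_ : #|Q :|: S| <= _); last by rewrite cardsU leq_subr.
    apply: subset_leq_card; apply/subsetP => z zX; rewrite in_setU in_setD zX andbT.
    by case: (z \in S).
  have : #|S| <= k + k + 2.
    rewrite /S cardsU; apply: leq_trans (leq_subr _ _) _.
    rewrite cardsU; apply: leq_add; first by apply: leq_trans (leq_subr _ _) _; apply: leq_add.
    by rewrite cards2; case: (x != y).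
  move=> h1 h2; lia.
have key : forall b c z, b \in Q -> nbhd G c :&: X = [set x; b] -> c != y ->
    z \in Q -> f z = f b -> (z == b) || (z == c).
  move=> b c z bQ hc ncy zQ fzb.
  apply/negP => /negP; rewrite negb_or => /andP[nzb nzc].
  have Gc : forall u, u \in X -> G c u = (u == x) || (u == b).
    move=> u uX; have := congr1 (fun A : {set T} => u \in A) hc.
    by rewrite /= in_setI /nbhd in_set uX andbT !inE.
  move: bQ zQ; rewrite /Q /S !inE => /andP[/norP[/norP[bRx bRy] /norP[nbx nby]] bX].
  move=> /andP[/norP[/norP[zRx zRy] /norP[nzx nzy]] zX].
  have Gcx : G c x by rewrite Gc // eqxx.
  have Gcb : G c b by rewrite Gc // eqxx orbT.
  have ncx : c != x by apply/eqP => e; move: Gcx; rewrite e irrG.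
  have ncb : c != b by apply/eqP => e; move: Gcb; rewrite e irrG.
  have Hcz : F (f c) (f b) -> H c z.
    move=> Fb; rewrite /H /flip eq_sym nzc /= Gc // (negbTE nzx) (negbTE nzb) /=.
    by rewrite fzb Fb.
  have Hcb : H c b = ~~ F (f c) (f b) by rewrite /H /flip ncb Gcb.
  case Fx: (F (f c) (f x)).
  - have Hyc : H y c.
      have nyx : (y == x) = false by rewrite eq_sym (negbTE nxy).
      have nyb : (y == b) = false by rewrite eq_sym (negbTE nby).
      by rewrite /H /flip eq_sym ncy /= symG Gc // nyx nyb /= symF -fxy Fx.
    have Fb : F (f c) (f b).
      case nFb: (F (f c) (f b)) => //; move: bRy; rewrite /R2 bX /= => /existsPn/(_ c).
      by rewrite Hyc Hcb nFb.
    move: zRy; rewrite /R2 zX /= => /existsPn/(_ c).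
    by rewrite Hyc Hcz.
  - have Hxc : H x c.
      by rewrite /H /flip eq_sym ncx /= symG Gcx symF Fx.
    have Fb : F (f c) (f b).
      case nFb: (F (f c) (f b)) => //; move: bRx; rewrite /R2 bX /= => /existsPn/(_ c).
      by rewrite Hxc Hcb nFb.
    move: zRx; rewrite /R2 zX /= => /existsPn/(_ c).
    by rewrite Hxc Hcz.
have inQ : forall z, z \in Q -> [/\ z \in X, z != x & z != y].
  by move=> z; rewrite /Q /S !inE => /andP[/norP[_ /norP[-> ->]] ->].
have Eex : forall b b', b \in Q -> b' \in Q ->
    nbhd G y :&: X = [set x; b] -> nbhd G y :&: X = [set x; b'] -> b = b'.
  move=> b b' /inQ[_ nbx _] _ -> e.
  have : b \in [set x; b'] by rewrite -e !inE eqxx orbT.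
  by rewrite !inE (negbTE nbx) => /eqP.
clearbody Q.
have fib : forall t : 'I_k, #|[set z in Q | f z == t]| <= 2.
  move=> t; rewrite leqNgt; apply/negP => /three_elems [z1 [z2 [z3 [h1 h2 h3 [n12 n13 n23]]]]].
  move: h1 h2 h3; rewrite !inE => /andP[q1 /eqP f1] /andP[q2 /eqP f2] /andP[q3 /eqP f3].
  have [z1X nz1x _] := inQ _ q1.
  have [z2X nz2x _] := inQ _ q2.
  have nx1 : x != z1 by rewrite eq_sym.
  have nx2 : x != z2 by rewrite eq_sym.
  have [c1 hc1] := psh x z1 xX z1X nx1.
  have [c2 hc2] := psh x z2 xX z2X nx2.
  case: (eqVneq c1 y) => [ey1 | ny1].
    case: (eqVneq c2 y) => [ey2 | ny2].
      rewrite ey1 in hc1; rewrite ey2 in hc2.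
      by rewrite (Eex z1 z2 q1 q2 hc1 hc2) eqxx in n12.
    have /orP[/eqP e1|/eqP e1] := key z2 c2 z1 q2 hc2 ny2 q1 (etrans f1 (esym f2));
      first by rewrite e1 eqxx in n12.
    have /orP[/eqP e3|/eqP e3] := key z2 c2 z3 q2 hc2 ny2 q3 (etrans f3 (esym f2));
      first by rewrite e3 eqxx in n23.
    by rewrite e1 e3 eqxx in n13.
  have /orP[/eqP e2|/eqP e2] := key z1 c1 z2 q1 hc1 ny1 q2 (etrans f2 (esym f1));
    first by rewrite e2 eqxx in n12.
  have /orP[/eqP e3|/eqP e3] := key z1 c1 z3 q1 hc1 ny1 q3 (etrans f3 (esym f1));
    first by rewrite e3 eqxx in n13.
  by rewrite e2 e3 eqxx in n23.
have : #|Q| <= 2 * k.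
  apply: leq_trans (_ : #|\bigcup_(t < k) [set z in Q | f z == t]| <= _).
    apply: subset_leq_card; apply/subsetP => z zQ.
    by apply/bigcupP; exists (f z) => //; rewrite !inE zQ eqxx.
  apply: leq_trans (card_bigcup_le _) _.
  apply: leq_trans (_ : \sum_(t < k) 2 <= _); first by apply: leq_sum => t _; apply: fib.
  by rewrite sum_nat_const card_ord mulnC.
move: cQ; lia.
Qed.

Lemma runner2 k (G : rel T) (X : {set T}) :
  symmetric G -> irreflexive G -> pair_shattered G X -> 8 * k + 3 <= #|X| ->
  ~ flipper_wins 2 k G.
Proof.
move=> symG irrG psh cX fwG.
have /set0Pn [x0 x0X] : X != set0 by rewrite -card_gt0; move: cX; lia.
apply: (@fwin_runner 2 k G (fun H v => k < #|R2 H X v|) _ G x0 (fwG x0)).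
  move=> H v f F symF PHv.
  have [z zA Pz] : exists2 z, z \in R2 H X v & k < #|R2 (flip G f F) X z|.
    case: (boolP [exists z in R2 H X v, k < #|R2 (flip G f F) X z|]) => [/exists_inP//|/exists_inPn nP].
    exfalso.
    have inj : {in R2 H X v &, injective f}.
      move=> a b aA bA fab; apply/eqP; apply/negPn/negP => nab.
      have aX : a \in X by move: aA; rewrite inE => /andP[].
      have bX : b \in X by move: bA; rewrite inE => /andP[].
      apply: (sameblock2 symG irrG symF psh aX bX nab fab); rewrite leqNgt; [exact: nP | exact: nP|].
      by rewrite -leqNgt; apply: leq_trans cX; lia.
    have : #|f @: R2 H X v| <= k by apply: leq_trans (max_card _) _; rewrite card_ord.
    by rewrite card_in_imset // leqNgt PHv.
  move: zA; rewrite inE => /andP[zX /existsP[c /andP[Hvc Hcz]]].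
  have /set0Pn [z' z'R] : R2 (flip G f F) X z != set0 by rewrite -card_gt0; apply: leq_ltn_trans Pz.
  move: z'R; rewrite inE => /andP[_ /existsP[c' /andP[Hzc' _]]].
  by exists [:: c; z]; split => //=; [rewrite Hvc Hcz | exists c'].
apply: leq_trans (_ : #|X :\ x0| <= _).
  by move: cX; rewrite (cardsD1 x0 X) x0X; lia.
apply: subset_leq_card; apply/subsetP => b; rewrite !inE => /andP[nbx bX].
rewrite bX /=.
have nxb : x0 != b by rewrite eq_sym.
have [c hc] := psh x0 b x0X bX nxb.
have Gc : forall u, u \in X -> G c u = (u == x0) || (u == b).
  move=> u uX; have := congr1 (fun A : {set T} => u \in A) hc.
  by rewrite /= in_setI /nbhd in_set uX andbT !inE.
by apply/existsP; exists c; rewrite (symG x0 c) !Gc // !eqxx orbT.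
Qed.
End C2.
Lemma win_all (T : finType) r (G : rel T) : symmetric G -> flipper_wins r #|T| G.
Proof.
move=> symG v0.
apply: (@fwin_step _ r #|T| G G v0 enum_rank (fun i j => G (enum_val i) (enum_val j))).
  by move=> i j; rewrite symG.
move=> p _ _; left => w; by rewrite /flip !enum_rankK addbb andbF.
Qed.

Lemma fw_spec (T : finType) r (G : rel T) : symmetric G -> flipper_wins r (fw r G) G.
Proof.
move=> symG; rewrite /fw; case: pselect => [h|n].
  by case: ex_minnP => m /asboolP.
by exfalso; apply: n; exists #|T|; apply: win_all.
Qed.

Lemma sub_card (T : finType) (X : {set T}) m : m <= #|X| ->
  exists2 X' : {set T}, X' \subset X & #|X'| = m.
Proof.
move=> mX; exists [set z in take m (enum X)].
  by apply/subsetP => z; rewrite inE => /mem_take; rewrite mem_enum.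
have u : uniq (take m (enum X)) by rewrite take_uniq ?enum_uniq.
by rewrite cardsE (card_uniqP u) size_takel // -cardE.
Qed.

Lemma shattered_sub (T : finType) (G : rel T) (X X' : {set T}) :
  shattered G X -> X' \subset X -> shattered G X'.
Proof.
move=> sh sub Y YX'.
have [v hv] := sh Y (subset_trans YX' sub).
exists v; by rewrite -(setIidPr sub) setIA hv (setIidPl YX').
Qed.

Theorem mainTheorem6 (T : finType) (G : rel T) :
  symmetric G -> irreflexive G ->
  VCdim G <= 8 * fw 1 G /\ twoVCdim G <= 8 * fw 2 G + 2.
Proof.
move=> symG irrG; split.
  rewrite /VCdim; apply/bigmax_leqP => X /asboolP shX.
  rewrite leqNgt; apply/negP => cX.
  have win := fw_spec 1 symG.
  move: cX win; set k := fw 1 G => cX win.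
  have /set0Pn [x0 _] : X != set0 by rewrite -card_gt0; move: cX; lia.
  case: k cX win => [|k'] cX win.
    by case: (win x0) => H v f F _ _; case: (f v).
  have h : 8 * k'.+1 + 1 <= #|X| by move: cX; lia.
  have [X' sub cX'] := sub_card h.
  exact: (runner1 symG irrG (shattered_sub shX sub) cX' (ltn0Sn _) win).
rewrite /twoVCdim; apply/bigmax_leqP => X /asboolP shX.
rewrite leqNgt; apply/negP => cX.
apply: (runner2 symG irrG shX _ (fw_spec 2 symG)); move: cX; lia.
Qed.
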